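(* Let $\lambda>0$, $\eta>0$ and $t>0$ be given. Then $$\big\||t\xi^2|^{\lambda}e^{\eta(|\xi|-\xi^2)t}\big\|_{L^\infty_\xi(\mathbb{R})}\le C_\lambda f_\lambda(t),\qquad f_\lambda(t)=\big(t^\lambda+\eta^{-\lambda}\big)\,e^{\frac{\eta}{8}\left(t+t^{1/2}\sqrt{t+\frac{16\lambda}{\eta}}\right)},$$ where $C_\lambda>0$ depends only on $\lambda$, and $f_\lambda$ is a nondecreasing function on $(0,\infty)$. *)

(* Defs.v *)
From HB Require Import structures.
From mathcomp Require Import all_boot all_order all_algebra.
From mathcomp Require Import all_classical all_reals all_analysis.
Set Implicit Arguments. Unset Strict Implicit. Unset Printing Implicit Defensive.
Import Order.TTheory GRing.Theory Num.Theory.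
Local Open Scope ring_scope.

Definition f_lam (R : realType) (lam eta t : R) : R :=
  (t `^ lam + eta `^ (- lam)) *
  expR (eta / 8 * (t + Num.sqrt t * Num.sqrt (t + 16 * lam / eta))).

Definition g_fun (R : realType) (lam eta t xi : R) : R :=
  `| t * xi ^+ 2 | `^ lam * expR (eta * (`|xi| - xi ^+ 2) * t).

(* Main.v *)
Require Import Defs.
From HB Require Import structures.
From mathcomp Require Import all_boot all_order all_algebra.
From mathcomp Require Import all_classical all_reals all_analysis.
From mathcomp Require Import ring lra.
Import Order.TTheory GRing.Theory Num.Theory.
Local Open Scope ring_scope.

Section H.
Variable R : realType.

Lemma powle_exp (lam v : R) : 0 < lam -> 0 <= v -> v `^ lam <= lam `^ lam * expR v.
Proof.
move=> l0 v0.
have w0 : 0 <= v / lam by rewrite divr_ge0 // ltW.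
have h : v / lam <= expR (v / lam).
  by apply: (le_trans _ (expR_ge1Dx (v/lam))); rewrite lerDr.
have h2 : (v / lam) `^ lam <= expR v.
  have -> : expR v = expR (v/lam) `^ lam by rewrite -expRM divfK ?gt_eqF.
  apply: ge0_ler_powR; [exact: ltW | by [] | by rewrite nnegrE expR_ge0 | exact: h].
have -> : v `^ lam = lam `^ lam * (v / lam) `^ lam.
  by rewrite -powRM ?(ltW l0) // [lam * _]mulrC divfK ?gt_eqF.
by rewrite ler_pM2l ?powR_gt0.
Qed.

Lemma keybound (lam eta u : R) : 0 < lam -> 0 < eta -> 0 <= u ->
  u `^ lam * expR (- (eta * u / 2)) <= (2 * lam) `^ lam * eta `^ (- lam).
Proof.
move=> l0 e0 u0.
have ep : 0 < eta `^ lam by rewrite powR_gt0.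
rewrite powRN -(ler_pM2l ep) mulrA mulrCA divff ?gt_eqF // mulr1.
rewrite -powRM ?(ltW e0) // expRN.
rewrite ler_pdivrMr ?expR_gt0 //.
have w0 : 0 <= eta * u / 2 by rewrite divr_ge0 // mulr_ge0 // ltW.
have -> : eta * u = 2 * (eta * u / 2) by field.
rewrite [X in _ <= _ * expR X](_ : _ = eta * u / 2); last by field.
rewrite (@powRM _ 2 (eta*u/2)) // (@powRM _ 2 lam) ?(ltW l0) // -[in X in _ <= X]mulrA ler_pM2l ?powR_gt0 //.
exact: powle_exp.
Qed.

Lemma sq_ge (t c : R) : 0 < t -> 0 <= c -> t <= Num.sqrt t * Num.sqrt (t + c).
Proof.
move=> t0 c0.
have s0 : 0 <= Num.sqrt t by exact: sqrtr_ge0.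
have ss : Num.sqrt t ^+ 2 = t by rewrite sqr_sqrtr // ltW.
have q : Num.sqrt t <= Num.sqrt (t + c) by rewrite ler_sqrt; lra.
by rewrite -{1}ss expr2; apply: ler_wpM2l.
Qed.
End H.

Theorem lemma2p2 (R : realType) :
  (forall lam : R, 0 < lam ->
     exists C : R, 0 < C /\
       forall eta t : R, 0 < eta -> 0 < t ->
         forall xi : R, g_fun lam eta t xi <= C * f_lam lam eta t)
  /\
  (forall lam eta : R, 0 < lam -> 0 < eta ->
     forall s t : R, 0 < s -> s <= t -> f_lam lam eta s <= f_lam lam eta t).
Proof.
split.
  move=> lam l0.
  exists (4 `^ lam + (2 * lam) `^ lam); split.
    by apply: addr_gt0; apply: powR_gt0 => //; rewrite mulr_gt0.
  move=> eta t e0 t0 xi.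
  rewrite /g_fun /f_lam.
  set E := eta / 8 * _.
  have c0 : 0 <= 16 * lam / eta by rewrite divr_ge0 ?mulr_ge0 // ltW.
  have hs := @sq_ge R _ _ t0 c0.
  have hE : eta * t / 4 <= E by rewrite /E; nra.
  have E0 : 0 <= E by apply: le_trans hE; rewrite divr_ge0 // mulr_ge0 // ltW.
  have x2 : xi ^+ 2 = `|xi| ^+ 2 by rewrite real_normK ?num_real.
  rewrite x2; set a := `|xi|.
  have a0 : 0 <= a by exact: normr_ge0.
  rewrite ger0_norm; last by rewrite mulr_ge0 // ?exprn_ge0 // ltW.
  have tl0 : 0 <= t `^ lam by exact: powR_ge0.
  have el0 : 0 <= eta `^ (- lam) by exact: powR_ge0.
  have eE : 1 <= expR E by rewrite -expR0 ler_expR.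
  have f0 : 0 <= (t `^ lam + eta `^ (- lam)) * expR E by rewrite mulr_ge0 ?addr_ge0 ?expR_ge0.
  have p4 : 0 <= 4 `^ lam by exact: powR_ge0.
  have p2 : 0 <= (2 * lam) `^ lam by exact: powR_ge0.
  case: (leP a 2) => ha.
  - apply: (@le_trans _ _ (4 `^ lam * ((t `^ lam + eta `^ (- lam)) * expR E))); last first.
      by rewrite [X in _ <= X]mulrDl lerDl mulr_ge0.
    apply: (@le_trans _ _ (4 `^ lam * t `^ lam * expR E)); last first.
      rewrite -mulrA; apply: ler_wpM2l => //; apply: ler_wpM2r; rewrite ?expR_ge0 // lerDl //.
    apply: ler_pM; rewrite ?powR_ge0 ?expR_ge0 //.
      rewrite -powRM ?(ltW t0) //; apply: ge0_ler_powR; rewrite ?(ltW l0) //.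
      + by rewrite nnegrE mulr_ge0 ?sqr_ge0 ?(ltW t0).
      + by rewrite nnegrE mulr_ge0 // ltW.
      + rewrite mulrC ler_pM2r //; nra.
    rewrite ler_expR; apply: le_trans hE.
    have : 0 <= eta * t * (a - 2^-1) ^+ 2 by rewrite mulr_ge0 ?sqr_ge0 // mulr_ge0 // ltW.
    move=> h; nra.
  - apply: (@le_trans _ _ ((2 * lam) `^ lam * ((t `^ lam + eta `^ (- lam)) * expR E))); last first.
      by rewrite [X in _ <= X]mulrDl lerDr mulr_ge0.
    apply: (@le_trans _ _ ((2 * lam) `^ lam * eta `^ (- lam))); last first.
      apply: ler_wpM2l => //.
      apply: (@le_trans _ _ ((t `^ lam + eta `^ (- lam)) * 1)); last by rewrite ler_wpM2l ?addr_ge0.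
      by rewrite mulr1 lerDr.
    apply: le_trans (@keybound R lam eta (t * a ^+ 2) l0 e0 _); last by rewrite mulr_ge0 ?sqr_ge0 ?(ltW t0).
    apply: ler_wpM2l; rewrite ?powR_ge0 // ler_expR.
    have h : 0 <= eta * t * a * (a - 2) by rewrite !mulr_ge0 ?ltW //; lra.
    nra.
move=> lam eta l0 e0 s t s0 st.
have t0 : 0 < t by apply: lt_le_trans st.
rewrite /f_lam; apply: ler_pM.
- by rewrite addr_ge0 ?powR_ge0.
- exact: expR_ge0.
- rewrite lerD2r; apply: ge0_ler_powR; rewrite ?nnegrE ?(ltW l0) ?(ltW s0) ?(ltW t0) //.
- rewrite ler_expR; apply: ler_wpM2l; first by rewrite divr_ge0 ?(ltW e0).
  have c0 : 0 <= 16 * lam / eta by rewrite divr_ge0 ?mulr_ge0 // ltW.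
  apply: lerD => //; apply: ler_pM; rewrite ?sqrtr_ge0 //.
  + by rewrite ler_sqrt ?(ltW t0).
  + by rewrite ler_sqrt ?lerD2r // addr_ge0 // ltW.
Qed.
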